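(* Let $U$ be a proper graded submodule of $M$. Then $U$ is a graded weakly $J_{gr}$-semiprime submodule of $M$ if and only if for every $r_g\in h(R)$, every graded submodule $K$ of $M$ and every $n\in\mathbb{Z}^+$ with $\{0\}\neq r_g^nK\subseteq U$, we have $r_gK\subseteq U+J_{gr}(M)$.
   Context: Standing conventions: $\Gamma$ is a group, $R=\bigoplus_{g\in\Gamma}R_g$ is a commutative $\Gamma$-graded ring with identity, and $M=\bigoplus_{g\in\Gamma}M_g$ is a unitary $\Gamma$-graded $R$-module. $h(R)=\bigcup_gR_g$, $h(M)=\bigcup_gM_g$ are the homogeneous elements. A submodule $U$ is graded if $U=\bigoplus_g(U\cap M_g)$. A graded submodule $U\neq M$ is Gr-maximal if every graded submodule $L$ with $U\subseteq L\subseteq M$ equals $U$ or $M$. $J_{gr}(M)$ is the intersection of all Gr-maximal submodules of $M$ ($=M$ if there are none). A proper graded submodule $U$ of $M$ is graded weakly $J_{gr}$-semiprime if whenever $r_g\in h(R)$, $m_h\in h(M)$, $n\in\mathbb{Z}^+$ and $0\neq r_g^nm_h\in U$, then $r_gm_h\in U+J_{gr}(M)$. *)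

(* Defs.v *)
From HB Require Import structures.
From mathcomp Require Import all_boot all_order all_algebra.
Set Implicit Arguments. Unset Strict Implicit. Unset Printing Implicit Defensive.
Import GRing.Theory.
Local Open Scope ring_scope.

Section Defs.
Variable Gamma : groupType.

Definition add_subgroups (V : zmodType) (S : Gamma -> V -> Prop) : Prop :=
  forall g, S g 0 /\ (forall x y, S g x -> S g y -> S g (x - y)).

(* V = (+)_{g in Gamma} S g  (internal direct sum): every element is a finite
   sum of homogeneous elements of pairwise distinct degrees, and such a
   finite sum vanishes only if all its terms vanish. *)
Definition direct_sum_decomp (V : zmodType) (S : Gamma -> V -> Prop) : Prop :=
  (forall x : V, exists s : seq (Gamma * V),
      uniq (map fst s) /\ (forall p, p \in s -> S p.1 p.2) /\
      x = \sum_(p <- s) p.2) /\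
  (forall s : seq (Gamma * V),
      uniq (map fst s) -> (forall p, p \in s -> S p.1 p.2) ->
      \sum_(p <- s) p.2 = 0 -> forall p, p \in s -> p.2 = 0).

Definition graded_ring (R : comPzRingType) (Rg : Gamma -> R -> Prop) : Prop :=
  add_subgroups Rg /\ direct_sum_decomp Rg /\
  (forall g h x y, Rg g x -> Rg h y -> Rg (g * h)%g (x * y)).

Definition graded_module (R : comPzRingType) (M : lmodType R)
    (Rg : Gamma -> R -> Prop) (Mg : Gamma -> M -> Prop) : Prop :=
  add_subgroups Mg /\ direct_sum_decomp Mg /\
  (forall g h (r : R) (m : M), Rg g r -> Mg h m -> Mg (g * h)%g (r *: m)).

Variables (R : comPzRingType) (M : lmodType R)
          (Rg : Gamma -> R -> Prop) (Mg : Gamma -> M -> Prop).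

Definition homR (r : R) : Prop := exists g, Rg g r.
Definition homM (m : M) : Prop := exists g, Mg g m.

Definition submodule (U : M -> Prop) : Prop :=
  U 0 /\ (forall x y, U x -> U y -> U (x + y)) /\
  (forall (r : R) x, U x -> U (r *: x)).

(* U = (+)_g (U cap M_g): every element of U is a finite sum of elements of
   the sets U cap M_g (the sum is then automatically direct). *)
Definition graded_submodule (U : M -> Prop) : Prop :=
  submodule U /\
  forall u, U u -> exists s : seq (Gamma * M),
      (forall p, p \in s -> U p.2 /\ Mg p.1 p.2) /\ u = \sum_(p <- s) p.2.

Definition proper_submod (U : M -> Prop) : Prop := exists x, ~ U x.

Definition gr_maximal (U : M -> Prop) : Prop :=
  graded_submodule U /\ proper_submod U /\
  forall L : M -> Prop, graded_submodule L -> (forall x, U x -> L x) ->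
    (forall x, L x <-> U x) \/ (forall x, L x).

(* J_gr(M): intersection of all Gr-maximal submodules (= M if none). *)
Definition Jgr (x : M) : Prop := forall N, gr_maximal N -> N x.

Definition plus_Jgr (U : M -> Prop) (x : M) : Prop :=
  exists u j, U u /\ Jgr j /\ x = u + j.

Definition gr_weakly_Jgr_semiprime (U : M -> Prop) : Prop :=
  graded_submodule U /\ proper_submod U /\
  forall (g h : Gamma) (r : R) (m : M) (n : nat),
    Rg g r -> Mg h m -> (0 < n)%N ->
    r ^+ n *: m != 0 -> U (r ^+ n *: m) -> plus_Jgr U (r *: m).

End Defs.

(* Main.v *)
Require Import Defs.
From HB Require Import structures.
From mathcomp Require Import all_boot all_order all_algebra.
From Stdlib Require Import Classical.
Import GRing.Theory.
Local Open Scope ring_scope.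

Section Aux.
Variables (Gamma : groupType) (R : comPzRingType) (M : lmodType R)
          (Rg : Gamma -> R -> Prop) (Mg : Gamma -> M -> Prop).

Lemma sum_closed (P : M -> Prop) (s : seq (Gamma * M)) (f : Gamma * M -> M) :
  P 0 -> (forall x y, P x -> P y -> P (x + y)) ->
  (forall p, p \in s -> P (f p)) -> P (\sum_(p <- s) f p).
Proof.
move=> P0 PD; elim: s => [|a s IH] H; first by rewrite big_nil.
rewrite big_cons; apply: PD; first by apply: H; rewrite inE eqxx.
by apply: IH => p Hp; apply: H; rewrite inE Hp orbT.
Qed.

Definition sumP (A B : M -> Prop) (y : M) := exists a b, A a /\ B b /\ y = a + b.

Lemma graded_sumP A B : graded_submodule Mg A -> graded_submodule Mg B ->
  graded_submodule Mg (sumP A B).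
Proof.
move=> [[A0 [AD AZ]] AG] [[B0 [BD BZ]] BG]; split; first split.
- by exists 0, 0; rewrite addr0.
- split.
  + move=> x y [a [b [Ha [Hb ->]]]] [a' [b' [Ha' [Hb' ->]]]].
    exists (a + a'), (b + b'); split; [exact: AD|split; [exact: BD|]].
    by rewrite addrACA.
  + move=> r x [a [b [Ha [Hb ->]]]]; exists (r *: a), (r *: b).
    by rewrite scalerDr; split; [exact: AZ|split; [exact: BZ|]].
- move=> u [a [b [Ha [Hb ->]]]].
  have [s1 [H1 E1]] := AG a Ha; have [s2 [H2 E2]] := BG b Hb.
  exists (s1 ++ s2); split; last by rewrite big_cat -E1 -E2.
  move=> p; rewrite mem_cat => /orP [/H1 [h1 h2]|/H2 [h1 h2]]; split => //.
  + by exists p.2, 0; rewrite addr0.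
  + by exists 0, p.2; rewrite add0r.
Qed.

Definition cyc (m : M) (y : M) := exists c : R, y = c *: m.

Lemma graded_cyc h m : graded_ring Rg -> graded_module Rg Mg -> Mg h m ->
  graded_submodule Mg (cyc m).
Proof.
move=> [_ [[RD _] _]] [_ [_ HZ]] Hm; split; first split.
- by exists 0; rewrite scale0r.
- split.
  + by move=> x y [c ->] [d ->]; exists (c + d); rewrite scalerDl.
  + by move=> r x [c ->]; exists (r * c); rewrite scalerA.
- move=> u [c ->]; have [s [_ [Hs Ec]]] := RD c.
  exists (map (fun p => (p.1 * h, p.2 *: m)%g) s); split.
  + move=> p /mapP [q Hq ->] /=; split; first by exists q.2.
    exact: HZ (Hs q Hq) Hm.
  + by rewrite big_map Ec scaler_suml.
Qed.

Lemma Jgr0 : Jgr Mg 0.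
Proof. by move=> N [[[N0 _] _] _]. Qed.

Lemma JgrD x y : Jgr Mg x -> Jgr Mg y -> Jgr Mg (x + y).
Proof.
move=> Hx Hy N HN; case: (HN) => [[[_ [ND _]] _] _]; apply: ND.
- exact: Hx. - exact: Hy.
Qed.

Lemma key N g h r s n : graded_ring Rg -> graded_module Rg Mg ->
  gr_maximal Mg N -> Rg g r -> Mg h s -> N (r ^+ n.+1 *: s) -> N (r *: s).
Proof.
move=> HR HM [HNg [_ HNmax]] Hr Hs.
case: (classic (N (r *: s))) => [//|Hn].
have Hrs : Mg (g * h)%g (r *: s) by case: HM => [_ [_ HZ]]; exact: HZ Hr Hs.
have HL := graded_sumP N (cyc (r *: s)) HNg (graded_cyc (g * h)%g (r *: s) HR HM Hrs).
have Hinc : forall x, N x -> sumP N (cyc (r *: s)) x.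
  by move=> u Hu; exists u, 0; rewrite addr0; split => //; split => //; exists 0; rewrite scale0r.
case: (HNmax _ HL Hinc).
- move=> E; exfalso; apply: Hn; apply/E; exists 0, (r *: s); rewrite add0r.
  by split; [case: HNg => [[]]|split => //; exists 1; rewrite scale1r].
- move=> All; have [u [b [Hu [[c ->] Es]]]] := All s.
  case: HNg => [[N0 [ND NZ]] _].
  elim: n => [//|n IH] H; apply: IH.
  have -> : r ^+ n.+1 *: s = r ^+ n.+1 *: u + c *: (r ^+ n.+2 *: s).
    rewrite {1}Es scalerDr !scalerA; congr (_ + _ *: s).
    by rewrite [r ^+ n.+2]exprSr -mulrA mulrCA.
  by apply: ND; apply: NZ.
Qed.

End Aux.

Theorem corollary2p6 (Gamma : groupType) (R : comPzRingType) (M : lmodType R)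
    (Rg : Gamma -> R -> Prop) (Mg : Gamma -> M -> Prop)
    (HR : graded_ring Rg) (HM : graded_module Rg Mg)
    (U : M -> Prop) (HU : graded_submodule Mg U) (HUp : proper_submod U) :
  gr_weakly_Jgr_semiprime Rg Mg U <->
  (forall (g : Gamma) (r : R) (K : M -> Prop) (n : nat),
     Rg g r -> graded_submodule Mg K -> (0 < n)%N ->
     (exists k, K k /\ r ^+ n *: k != 0) ->
     (forall k, K k -> U (r ^+ n *: k)) ->
     forall k, K k -> plus_Jgr Mg U (r *: k)).
Proof.
have [[U0 [UD UZ]] _] := HU.
split.
- move=> [_ [_ H]] g r K n Hr HK Hn _ HKU k Hk.
  have [s [Hs ->]] := HK.2 k Hk.
  rewrite scaler_sumr; apply: sum_closed.
  + by exists 0, 0; rewrite addr0; split => //; split => //; apply: Jgr0.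
  + move=> x y [u [j [Hu [Hj ->]]]] [u' [j' [Hu' [Hj' ->]]]].
    exists (u + u'), (j + j'); rewrite addrACA; split; first exact: UD.
    by split => //; apply: JgrD.
  + move=> p /Hs [HKp HMp].
    case: (eqVneq (r ^+ n *: p.2) 0) => E.
    * exists 0, (r *: p.2); rewrite add0r; split => //; split => //.
      move=> N HN; case: n Hn E {HKU H} => [//|n] _ E.
      apply: (@key _ _ _ Rg Mg N g p.1 r p.2 n HR HM HN Hr HMp); rewrite E.
      by case: HN => [[[N0 _] _] _].
    * exact: H Hr HMp Hn E (HKU _ HKp).
- move=> H; split => //; split => //.
  move=> g h r m n Hr Hm Hn Hne HUm.
  have HK := @graded_cyc _ _ _ Rg Mg h m HR HM Hm.
  refine (H g r _ n Hr HK Hn _ _ m _).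
  + by exists m; split => //; exists 1; rewrite scale1r.
  + by move=> k [c ->]; rewrite scalerA mulrC -scalerA; apply: UZ.
  + by exists 1; rewrite scale1r.
Qed.
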